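(* There are absolute constants $c_1,c_2>0$ such that the following holds. Let $\mathcal U$ be a finite set, $\epsilon<1/400$, $\Pi$ an orthogonal projector on $\mathbb{R}^{\mathcal U}$, and $f:\mathcal U\to\{0,1\}$ with $\Pr_{u\in\mathcal U}[f(u)=1]=\mu>0$ and $\|\Pi f\|_2^2\ge(1-\epsilon)\mu$. Then there is a function $\bar f:\mathcal U\to\mathbb{R}$ such that $\|\Pi\bar f\|_4^4\ge c_1\mu$ and $(\Pi f)(u)^2\ge c_2|\bar f(u)|$ for every $u\in\mathcal U$.
   Context: Norms and inner products on $\mathbb{R}^{\mathcal U}$ use the uniform (expectation) measure: $\langle g,h\rangle=\mathbb{E}_{u}g(u)h(u)$, $\|g\|_p=(\mathbb{E}_u|g(u)|^p)^{1/p}$; orthogonality of $\Pi$ refers to this inner product. *)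

(* Defs.v *)
(* real-closed fields (rcfType) stand in for the reals. *)
From HB Require Import structures.
From mathcomp Require Import all_boot all_order all_algebra.
Set Implicit Arguments. Unset Strict Implicit. Unset Printing Implicit Defensive.
Import Order.TTheory GRing.Theory Num.Theory.
Local Open Scope ring_scope.

Definition expect (R : rcfType) (U : finType) (g : U -> R) : R :=
  (\sum_(u : U) g u) / #|U|%:R.

Definition inner (R : rcfType) (U : finType) (g h : U -> R) : R :=
  expect (fun u => g u * h u).

Definition lpnorm_pow (R : rcfType) (U : finType) (p : nat) (g : U -> R) : R :=
  expect (fun u => `|g u| ^+ p).

Definition orth_proj (R : rcfType) (U : finType) (Pi : (U -> R) -> (U -> R)) : Prop :=
  [/\ (forall (a : R) (g h : U -> R) (u : U),
         Pi (fun x => a * g x + h x) u = a * Pi g u + Pi h u),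
      (forall (g : U -> R) (u : U), Pi (Pi g) u = Pi g u)
    & (forall g h : U -> R, inner (Pi g) h = inner g (Pi h))].

Definition indic (R : rcfType) (U : finType) (f : U -> bool) : U -> R :=
  fun u => (f u)%:R.

Definition prob (R : rcfType) (U : finType) (f : U -> bool) : R :=
  #|[set u | f u]|%:R / #|U|%:R.

(* Main.v *)
Require Import Defs.
From HB Require Import structures.
From mathcomp Require Import all_boot all_order all_algebra.
From mathcomp Require Import lra.
Import Order.TTheory GRing.Theory Num.Theory.
Local Open Scope ring_scope.

Lemma inner_sum {R : rcfType} {U : finType} {g h gg hh : U -> R} :
  #|U|%:R != 0 :> R -> inner g h = inner gg hh ->
  \sum_u g u * h u = \sum_u gg u * hh u.
Proof. by move=> N0; rewrite /inner /expect => /(mulIf (invr_neq0 N0)). Qed.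

Lemma lp2E {R : rcfType} {U : finType} (g : U -> R) :
  lpnorm_pow 2 g = (\sum_u g u * g u) / #|U|%:R.
Proof.
rewrite /lpnorm_pow /expect; congr (_ / _); apply: eq_bigr => u _.
by rewrite real_normK ?num_real // expr2.
Qed.

Lemma lp4E {R : rcfType} {U : finType} (g : U -> R) :
  lpnorm_pow 4 g = (\sum_u (g u * g u) * (g u * g u)) / #|U|%:R.
Proof.
rewrite /lpnorm_pow /expect; congr (_ / _); apply: eq_bigr => u _.
by rewrite (_ : 4 = 2 * 2)%N // exprM real_normK ?num_real // expr2.
Qed.

Theorem lemma4p11 :
  exists c1 c2 : rat, 0 < c1 /\ 0 < c2 /\
  forall (R : rcfType) (U : finType) (eps : R)
         (Pi : (U -> R) -> (U -> R)) (f : U -> bool),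
    eps < 1 / 400 ->
    orth_proj Pi ->
    0 < prob R f ->
    (1 - eps) * prob R f <= lpnorm_pow 2 (Pi (indic R f)) ->
    exists fbar : U -> R,
      ratr c1 * prob R f <= lpnorm_pow 4 (Pi fbar) /\
      (forall u : U, ratr c2 * `|fbar u| <= (Pi (indic R f) u) ^+ 2).
Proof.
exists (20%:R^-1), (4%:R^-1); split; first by []; split; first by [].
move=> R U eps Pi f heps [_ Pidem Psa] hmu hnorm.
set F := indic R f. set G := Pi F.
pose B := fun u => if f u && (1/2 <= G u) then 1 else 0 : R.
exists B.
have N0 : #|U|%:R != 0 :> R.
  apply/eqP => N0; move: hmu; rewrite /prob N0 invr0 mulr0 ltxx //.
have Npos : 0 < #|U|%:R :> R by rewrite lt0r N0 ler0n.
have sF : \sum_u F u = #|[set u | f u]|%:R.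
  rewrite /F /indic (bigID (fun u => f u)) /= [X in _ + X]big1; last by move=> u /negbTE ->.
  rewrite addr0 (eq_bigr (fun _ => 1)); last by move=> u ->.
  by rewrite sumr_const cardsE.
have hprob : prob R f = (\sum_u F u) / #|U|%:R by rewrite /prob sF.
have -> : ratr (20%:R^-1 : rat) = (20:R)^-1 by rewrite fmorphV; congr (_^-1); exact: ratr_nat.
have -> : ratr (4%:R^-1 : rat) = (4:R)^-1 by rewrite fmorphV; congr (_^-1); exact: ratr_nat.
split; last first.
  move=> u; rewrite /B; case: ifP => [/andP [_ h]|_]; last by rewrite normr0 mulr0 sqr_ge0.
  rewrite normr1 mulr1; apply: (le_trans _ (_ : (1/2)^+2 <= G u ^+ 2)).
    by rewrite expr2; lra.
  rewrite ler_sqr ?nnegrE //; lra.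
have hGG : \sum_u G u * G u = \sum_u F u * G u.
  apply: inner_sum => //; rewrite /G Psa /inner /expect.
  by congr (_ / _); apply: eq_bigr => u _; rewrite Pidem.
have hBG : \sum_u F u * Pi B u = \sum_u G u * B u.
  exact: (inner_sum N0 (esym (Psa F B))).
have hn : (1 - eps) * \sum_u F u <= \sum_u G u * G u.
  move: hnorm; rewrite hprob lp2E mulrA ler_pM2r ?invr_gt0 //.
have P1 : \sum_u (F u / 2 - 2 * (F u * F u - 2 * (F u * G u) + G u * G u)) <= \sum_u G u * B u.
  apply: ler_sum => u _; rewrite /B /F /indic; case: (f u) => /=.
    have := sqr_ge0 (G u - 3/4); case: (lerP (1/2) (G u)) => h; rewrite ?mulr1 ?mulr0 => hs.
      nra.
    have : 0 < (1/2 - G u) * (3/2 - G u) by apply: mulr_gt0; lra.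
    nra.
  have := sqr_ge0 (G u); nra.
have P2 : \sum_u (F u * Pi B u / 2 - 3/16 * F u) <= \sum_u (Pi B u * Pi B u) * (Pi B u * Pi B u).
  apply: ler_sum => u _; rewrite /F /indic; case: (f u) => /=; last first.
    have := sqr_ge0 (Pi B u * Pi B u); rewrite expr2; nra.
  rewrite !mul1r mulr1; set x := Pi B u.
  have hq : 0 <= x * x + x + 3/4 by have := sqr_ge0 (x + 1/2); nra.
  have := mulr_ge0 (sqr_ge0 (x - 1/2)) hq; nra.
rewrite hprob lp4E mulrA ler_pM2r ?invr_gt0 //.
move: P1 P2; rewrite !sumrB -!mulr_sumr -!mulr_suml.
have hF2 : \sum_u F u * F u = \sum_u F u.
  by apply: eq_bigr => u _; rewrite /F /indic; case: (f u); rewrite ?mulr1 ?mulr0.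
rewrite big_split /=.
rewrite sumrB -mulr_sumr hF2 hBG hGG.
rewrite hGG in hn.
have S0 : 0 <= \sum_u F u by apply: sumr_ge0 => u _; rewrite /F /indic ler0n.
have he : 0 <= 1/400 - eps by lra.
have := mulr_ge0 he S0.
move: hn S0; set S := \sum_u F u; set a := \sum_i F i * G i.
set b := \sum_u G u * B u; set c := \sum_u _ * _ * _.
rewrite !mulrBl !mul1r.
move=> hn S0 hh P1 P2; move: hn hh S0 P1 P2; generalize (eps * S) => t; rewrite -[20^-1](mul1r) -[400^-1](mul1r); move=> *; lra.

Qed.
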